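(* Let $\mathcal{G}=(\mathcal{V},\mathcal{E})$ be a directed graph with $n$ nodes, $m$ edges and terminals $s,t$, let $f:2^{\mathcal{E}}\to\mathbb{R}_+$ be normalized, monotone nondecreasing and submodular with Lovász extension $\tilde f$, and let $C^*$ be an $(s,t)$-cut minimizing $f$. Let $(x^*,y^* )$ be an optimal solution of the relaxation $$\min_{y\in\mathbb{R}^{\mathcal{E}},x\in\mathbb{R}^{\mathcal{V}}}\tilde f(y)\ \text{ s.t. } -x(u)+x(v)+y(e)\ge 0\ \forall e=(u,v)\in\mathcal{E},\ x(s)-x(t)\ge1,\ y\ge0,$$ with $x^*\in[0,1]^n$, $y^*\in[0,1]^m$. Order the edges so that $y^*(e_1)\ge\dots\ge y^*(e_m)$; for $i=1,\dots,m$ let $C_i=\{e_j: y^*(e_j)\ge y^*(e_i)\}$, and at the first $i$ for which $C_i$ is an $(s,t)$-cut, prune $C_i$ to a minimal $(s,t)$-cut $\widehat C\subseteq C_i$ and return it; let $\theta=y^*(e_i)$ for this $i$. Then $$f(\widehat C)\le\frac1\theta f(C^* )\le |P_{\max}|\,f(C^* )\le (n-1)f(C^* ),$$ where $P_{\max}$ is a longest simple $(s,t)$-path in $\mathcal{G}$ and $|P_{\max}|$ its number of edges.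
   Context: An $(s,t)$-cut is a set of edges whose removal disconnects all $s$-$t$ paths; it is minimal if no proper subset is a cut. The Lovász extension: for $x\in[0,1]^m$ written uniquely as $x=\sum_j\lambda_j\chi_{B_j}$ with $\lambda_j>0$ and nested level sets $B_1\subset B_2\subset\cdots$, $\tilde f(x)=\sum_j\lambda_j f(B_j)$, where $\chi_B$ is the indicator vector of $B$. *)

(* Defs.v *)
From mathcomp Require Import all_boot all_order all_algebra.
Set Implicit Arguments. Unset Strict Implicit. Unset Printing Implicit Defensive.
Import Order.TTheory GRing.Theory Num.Theory.
Local Open Scope ring_scope.

Section Graph.
Variables (V E : finType) (src dst : E -> V).

Fixpoint is_walk (u w : V) (p : seq E) : bool :=
  match p with
  | [::] => u == w
  | e :: p' => (src e == u) && is_walk (dst e) w p'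
  end.

Definition walk_vertices (u : V) (p : seq E) : seq V := u :: map dst p.

Definition simple_path (u w : V) (p : seq E) : bool :=
  is_walk u w p && uniq (walk_vertices u p).

Definition is_st_cut (s t : V) (C : {set E}) : Prop :=
  forall p, simple_path s t p -> has (fun e => e \in C) p.

Definition is_min_st_cut (s t : V) (C : {set E}) : Prop :=
  is_st_cut s t C /\ forall D : {set E}, D \proper C -> ~ is_st_cut s t D.

Definition is_longest_st_path (s t : V) (P : seq E) : Prop :=
  simple_path s t P /\ forall Q, simple_path s t Q -> (size Q <= size P)%N.

End Graph.

Section SetFun.
Variables (R : realFieldType) (E : finType) (f : {set E} -> R).

Definition normalized := f set0 = 0.
Definition nonneg_setfun := forall A, 0 <= f A.
Definition monotone_setfun := forall A B : {set E}, A \subset B -> f A <= f B.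
Definition submodular := forall A B : {set E}, f (A :|: B) + f (A :&: B) <= f A + f B.

(* next lower level of y below v (0 if none): v_{j+1} for v = v_j *)
Definition lower_level (y : E -> R) (v : R) : R :=
  \big[Num.max/0]_(e | y e < v) y e.

(* Lovász extension: writing y = sum_j (v_j - v_{j+1}) chi_{B_j} where
   v_1 > v_2 > ... > v_k > 0 are the distinct positive values of y,
   v_{k+1} = 0 and B_j = {e | y e >= v_j}. *)
Definition lovasz (y : E -> R) : R :=
  \sum_(v <- undup [seq y e | e <- enum E] | 0 < v)
     (v - lower_level y v) * f [set e | v <= y e].

End SetFun.

Definition relax_feasible (R : realFieldType) (V E : finType) (src dst : E -> V)
  (s t : V) (x : V -> R) (y : E -> R) : Prop :=
  (forall e, - x (src e) + x (dst e) + y e >= 0) /\ x s - x t >= 1 /\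
  (forall e, 0 <= y e).

(* Main.v *)
Require Import Defs.
From mathcomp Require Import all_boot all_order all_algebra.
From mathcomp Require Import lra zify.
From Stdlib Require Import Classical.
Set Implicit Arguments. Unset Strict Implicit. Unset Printing Implicit Defensive.
Import Order.TTheory GRing.Theory Num.Theory.
Local Open Scope ring_scope.

Lemma max_or (R : realFieldType) (a b : R) : Num.max a b = a \/ Num.max a b = b.
Proof. by rewrite /Num.max /Order.max; case: ifP; auto. Qed.

Lemma count_lt (T : Type) (P Q : pred T) s :
  (forall y, P y -> Q y) -> has (fun y => Q y && ~~ P y) s -> (count P s < count Q s)%N.
Proof.
move=> PQ; elim: s => //= y s IH /orP[/andP[Qy nPy] | H].
  rewrite Qy (negbTE nPy) /= add0n add1n ltnS; exact: sub_count.
have := IH H; case Py: (P y); first by rewrite (PQ _ Py) /=; lia.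
by case: (Q y) => /=; lia.
Qed.

Section Lov.
Variables (R : realFieldType) (E : finType) (f : {set E} -> R).
Hypothesis f_nonneg : nonneg_setfun f.
Hypothesis f_mono : monotone_setfun f.
Variable y : E -> R.
Hypothesis y_ge0 : forall e, 0 <= y e.

Let U := undup [seq y e | e <- enum E].
Let lw := lower_level y.
Let B (v : R) := [set e | v <= y e].

Lemma lw_lt w : 0 < w -> 0 <= lw w /\ lw w < w.
Proof.
move=> w0; rewrite /lw /lower_level.
elim/big_ind: _.
- by split.
- by move=> a b Ha Hb; by case: (max_or a b) => ->.
- by move=> e He; split.
Qed.

Lemma lw_ge e w : y e < w -> y e <= lw w.
Proof. by move=> H; rewrite /lw /lower_level (bigD1 e) //= le_max lexx. Qed.

Lemma lw_in w : lw w = 0 \/ lw w \in U.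
Proof.
rewrite /lw /lower_level.
elim/big_ind: _; first by left.
- by move=> a b Ha Hb; by case: (max_or a b) => ->.
- by move=> e _; right; rewrite mem_undup; apply: map_f; rewrite mem_enum.
Qed.

Lemma inU v : v \in U -> exists e, v = y e.
Proof. by rewrite mem_undup => /mapP[e _ ->]; exists e. Qed.

Let T w := \sum_(v <- U | (0 < v) && (v <= w)) (v - lw v) * f (B v).

Lemma T0 : T 0 = 0.
Proof. by rewrite /T big1 // => v /andP[h1 h2]; lra. Qed.

Lemma T_step w : w \in U -> 0 < w -> T w = (w - lw w) * f (B w) + T (lw w).
Proof.
move=> wU w0; have [lw0 lwlt] := lw_lt w0.
rewrite /T (big_rem w) //= w0 lexx /=; congr (_ + _).
rewrite [RHS](big_rem w) //= (_ : w <= lw w = false); last first.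
  by apply/negbTE; rewrite -ltNge.
rewrite andbF add0r big_seq_cond [RHS]big_seq_cond; apply: eq_bigl => v.
case: (boolP (v \in rem w U)) => //= Hv.
move: Hv; rewrite mem_rem_uniq ?undup_uniq // inE => /andP[vw vU].
have [e Ev] := inU vU; subst v.
case: (boolP (0 < y e)) => //= _.
apply/idP/idP => H.
- by apply: lw_ge; rewrite lt_neqAle vw H.
- exact: (le_trans H (ltW lwlt)).
Qed.

Lemma T_ge w : (w = 0 \/ (w \in U /\ 0 < w)) -> w * f (B w) <= T w.
Proof.
suff: forall n w, (count (fun v : R => (v < w)%R) U < n)%N ->
  (w = 0 \/ (w \in U /\ 0 < w)) -> w * f (B w) <= T w.
  by move=> H Hw; apply: (H _ w (ltnSn _)).
elim=> // n IH {}w Hc [-> | [wU w0]]; first by rewrite T0 mul0r.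
have [lw0 lwlt] := lw_lt w0.
have Hlw : lw w * f (B (lw w)) <= T (lw w).
  have [-> | lwne] := eqVneq (lw w) 0; first by rewrite T0 mul0r.
  have lwU : lw w \in U by case: (lw_in w) => // E0; rewrite E0 eqxx in lwne.
  apply: IH; last by right; split=> //; rewrite lt_neqAle eq_sym lwne.
  suff : (count (fun v:R => (v < lw w)%R) U < count (fun v:R => (v < w)%R) U)%N.
    by move: Hc; lia.
  apply: count_lt.
    by move=> v /= H; apply: (lt_trans H lwlt).
  by apply/hasP; exists (lw w) => //=; rewrite lwlt ltxx.
rewrite T_step //.
have : f (B w) <= f (B (lw w)).
  by apply: f_mono; apply/subsetP => e; rewrite !inE => H; apply: le_trans H; apply: ltW.
have := f_nonneg (B w).
nra.
Qed.

Lemma lov_ge e : 0 < y e -> y e * f (B (y e)) <= lovasz f y.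
Proof.
move=> ye0; apply: (le_trans (T_ge _)).
  by right; split=> //; rewrite mem_undup; apply: map_f; rewrite mem_enum.
rewrite /lovasz (bigID (fun v => v <= y e)) /= -/U -/lw -/B lerDl.
apply: sumr_ge0 => v /andP[v0 _]; apply: mulr_ge0 => //.
by have [_ H] := lw_lt v0; rewrite subr_ge0 ltW.
Qed.
End Lov.

Lemma lov_ind (R : realFieldType) (E : finType) (f : {set E} -> R) (C : {set E}) :
  nonneg_setfun f ->
  lovasz f (fun e => if e \in C then 1 else 0) <= f C.
Proof.
move=> fnn; set chi := fun e => _.
have chi01 e : chi e = 0 \/ chi e = 1 by rewrite /chi; case: (e \in C); auto.
rewrite /lovasz; set U := undup _.
have inU v : v \in U -> v = 0 \/ v = 1.
  by rewrite mem_undup => /mapP[e _ ->].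
case: (boolP (1 \in U)) => H1.
- rewrite (big_rem 1) //= ltr01.
  rewrite big_seq_cond big1 ?addr0; last first.
    move=> v /andP[]; rewrite mem_rem_uniq ?undup_uniq // inE => /andP[v1 vU] v0.
    by case: (inU _ vU) => Ev; move: v0 v1; rewrite Ev ?ltxx ?eqxx.
  have -> : lower_level chi 1 = 0.
    rewrite /lower_level; elim/big_ind: _ => //.
      by move=> a b -> ->; rewrite maxxx.
    by move=> e; case: (chi01 e) => -> //; rewrite ltxx.
  rewrite subr0 mul1r le_eqVlt; apply/orP; left; apply/eqP; congr f.
  by apply/setP => e; rewrite inE /chi; case: (e \in C); rewrite ?lexx // ler10.
- rewrite big_seq_cond big1; first exact: fnn.
  move=> v /andP[vU v0]; case: (inU _ vU) => Ev; move: v0; rewrite Ev ?ltxx //.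
  by move=> _; rewrite -Ev vU in H1.
Qed.



Section Graph2.
Variables (V E : finType) (src dst : E -> V).

Section Reach.
Variable C : {set E}.
Definition rel_nc : rel V := fun a b => [exists e, [&& e \notin C, src e == a & dst e == b]].

Fixpoint mk (u : V) (p : seq V) : seq E :=
  if p is w :: p' then
    (if [pick e | [&& e \notin C, src e == u & dst e == w]] is Some e then e :: mk w p' else [::])
  else [::].

Lemma mk_spec u p : path rel_nc u p ->
  [&& is_walk src dst u (last u p) (mk u p), map dst (mk u p) == p &
      all (fun e => e \notin C) (mk u p)].
Proof.
elim: p u => [|w p IH] u /=; first by rewrite eqxx.
move=> /andP[/existsP[e0 He0] pp].
case: pickP => [e /and3P[eC /eqP se /eqP de] | none]; last by rewrite none in He0.
have /and3P[w1 m1 a1] := IH _ pp.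
by rewrite /= se eqxx de w1 eC a1 (eqP m1) eqxx.
Qed.

Lemma no_conn s t : is_st_cut src dst s t C -> ~~ connect rel_nc s t.
Proof.
move=> cut; apply/negP => /connectP[p pp Et]; move: Et.
case/shortenP: pp => p' pp' up' _ Et.
have /and3P[w1 /eqP m1 a1] := mk_spec pp'.
have : simple_path src dst s t (mk s p').
  by rewrite /simple_path Et w1 /walk_vertices m1.
move=> /cut /hasP[e eIn eC].
by move: a1 => /allP /(_ e eIn); rewrite eC.
Qed.

Lemma feas_ind (R : realFieldType) s t : is_st_cut src dst s t C ->
  relax_feasible src dst s t
    (fun v => if connect rel_nc s v then 1 else 0 : R)
    (fun e => if e \in C then 1 else 0).
Proof.
move=> cut; split; [|split].
- move=> e; case: (boolP (e \in C)) => eC.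
    by case: (connect _ _ _); case: (connect _ _ _); rewrite ?addrN; lra.
  case: (boolP (connect rel_nc s (src e))) => H.
    have -> : connect rel_nc s (dst e).
      apply: connect_trans H (connect1 _); apply/existsP; exists e.
      by rewrite eC !eqxx.
    by lra.
  by case: (connect _ _ _); lra.
- by rewrite connect0 (negbTE (no_conn cut)); lra.
- by move=> e; case: (e \in C); lra.
Qed.
End Reach.

Section Walk.
Variables (R : realFieldType) (x : V -> R) (y : E -> R).
Hypothesis hx : forall e, - x (src e) + x (dst e) + y e >= 0.
Hypothesis hy : forall e, 0 <= y e.

Lemma walk_sum u w p : is_walk src dst u w p -> x u - x w <= \sum_(e <- p) y e.
Proof.
elim: p u => [|e p IH] u /=; first by move=> /eqP ->; rewrite big_nil subrr.
move=> /andP[/eqP se wp]; rewrite big_cons.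
have := IH _ wp; have := hx e; rewrite se; lra.
Qed.

Lemma big_edge u w p : is_walk src dst u w p -> 1 <= x u - x w ->
  exists2 e, e \in p & 1 <= (size p)%:R * y e.
Proof.
move=> wp H1; have Hs := le_trans H1 (walk_sum wp).
set M := \big[Num.max/0]_(e <- p) y e.
have Mub : forall e, e \in p -> y e <= M.
  rewrite /M; elim: (p) => // a q IH e; rewrite inE big_cons le_max => /orP[/eqP -> | H].
    by rewrite lexx.
  by rewrite IH ?orbT.
have Mat : M = 0 \/ exists2 e, e \in p & M = y e.
  rewrite /M; elim: (p) => [|a q IH]; first by left; rewrite big_nil.
  rewrite big_cons; case: (max_or (y a) (\big[Num.max/0]_(j <- q) y j)) => ->.
    by right; exists a; rewrite ?mem_head.
  case: IH => [-> | [e eq ->]]; first by left.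
  by right; exists e; rewrite // inE eq orbT.
have HsM : \sum_(e <- p) y e <= (size p)%:R * M.
  elim: (p) Mub => [|a q IH] Hub; first by rewrite big_nil mul0r.
  rewrite big_cons /= -addn1 natrD mulrDl mul1r addrC.
  apply: lerD; first by apply: IH => e eq; apply: Hub; rewrite inE eq orbT.
  by apply: Hub; rewrite mem_head.
case: Mat => [M0 | [e ep Me]].
  by move: HsM Hs; rewrite M0 mulr0; lra.
by exists e => //; rewrite -Me; apply: (le_trans Hs HsM).
Qed.
End Walk.

Lemma simple_size s t q : simple_path src dst s t q -> (size q < #|V|)%N.
Proof.
move=> /andP[_ /card_uniqP H]; have := max_card (mem (walk_vertices dst s q)).
by rewrite H /walk_vertices /= size_map.
Qed.

End Graph2.
Unset Implicit Arguments.
Theorem lemma9 (R : realFieldType) (V E : finType) (src dst : E -> V) (s t : V)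
  (f : {set E} -> R)
  (f_norm : normalized f) (f_nonneg : nonneg_setfun f)
  (f_mono : monotone_setfun f) (f_sub : submodular f)
  (Cstar : {set E})
  (Cstar_cut : is_st_cut src dst s t Cstar)
  (Cstar_min : forall C, is_st_cut src dst s t C -> f Cstar <= f C)
  (xs : V -> R) (ys : E -> R)
  (opt_feas : relax_feasible src dst s t xs ys)
  (opt_min : forall x y, relax_feasible src dst s t x y -> lovasz f ys <= lovasz f y)
  (xs01 : forall v, 0 <= xs v <= 1) (ys01 : forall e, 0 <= ys e <= 1)
  (sigma : 'I_#|E| -> E) (sigma_bij : bijective sigma)
  (sigma_sorted : forall i j : 'I_#|E|, (i <= j)%N -> ys (sigma j) <= ys (sigma i))
  (i0 : 'I_#|E|)
  (i0_cut : is_st_cut src dst s t [set e | ys (sigma i0) <= ys e])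
  (i0_first : forall j : 'I_#|E|, (j < i0)%N ->
      ~ is_st_cut src dst s t [set e | ys (sigma j) <= ys e])
  (Chat : {set E})
  (Chat_sub : Chat \subset [set e | ys (sigma i0) <= ys e])
  (Chat_min : is_min_st_cut src dst s t Chat) :
  let theta := ys (sigma i0) in
  f Chat <= theta^-1 * f Cstar /\
  forall Pmax : seq E, is_longest_st_path src dst s t Pmax ->
    theta^-1 * f Cstar <= (size Pmax)%:R * f Cstar /\
    (size Pmax)%:R * f Cstar <= (#|V| - 1)%:R * f Cstar.
Proof.
move=> theta.
case: opt_feas => hx [hst hy].
case: sigma_bij => g sg gs.
have th0 : 0 <= theta by apply: hy.
have thL : forall L : nat, (forall q, simple_path src dst s t q -> (size q <= L)%N) ->
    (exists q, simple_path src dst s t q) -> 1 <= L%:R * theta.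
  move=> L HL [q /andP[qw qu]].
  have big (q' : seq E) : simple_path src dst s t q' ->
      exists2 e, e \in q' & 1 <= L%:R * ys e.
    move=> /[dup] Hq' /andP[qw' _].
    have [e eq He] := big_edge hx qw' hst.
    exists e => //; apply: (le_trans He); apply: ler_wpM2r => //.
    by rewrite ler_nat; apply: HL.
  have [e0 _ He0] := big q (introT andP (conj qw qu)).
  pose P := fun j : 'I_#|E| => 1 <= L%:R * ys (sigma j).
  have Pg : P (g e0) by rewrite /P gs.
  case: (arg_maxnP (fun j : 'I_#|E| => nat_of_ord j) Pg) => j Pj jmax.
  have cutj : is_st_cut src dst s t [set e | ys (sigma j) <= ys e].
    move=> q' Hq'; have [e eq' He] := big q' Hq'.
    apply/hasP; exists e => //; rewrite inE.
    have : P (g e) by rewrite /P gs.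
    by move=> /jmax /sigma_sorted; rewrite gs.
  have ij : (i0 <= j)%N.
    by rewrite leqNgt; apply/negP => /i0_first; apply.
  apply: (le_trans Pj); apply: ler_wpM2l => //; exact: sigma_sorted.
have lovle : lovasz f ys <= f Cstar.
  apply: (le_trans (opt_min _ _ (feas_ind R Cstar_cut))).
  exact: lov_ind.
have thpos : (exists q, simple_path src dst s t q) -> 0 < theta.
  move=> Hq; have := thL #|V| (fun q Hq => ltnW (simple_size Hq)) Hq.
  rewrite lt_neqAle th0 andbT; apply: contraTneq => <-; rewrite mulr0; lra.
split.
- case: (classic (exists q, simple_path src dst s t q)) => [Hq | Hnq].
  + have tp := thpos Hq.
    have H1 : f Chat <= f [set e | theta <= ys e] by apply: f_mono.
    have H2 : theta * f [set e | theta <= ys e] <= lovasz f ys.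
      by apply: lov_ge => //; move=> e; apply: hy.
    rewrite -(ler_pM2l tp) mulrA mulfV ?mul1r ?gt_eqF //.
    apply: (le_trans _ lovle); apply: le_trans H2; rewrite ler_pM2l //.
  + have -> : Chat = set0.
      apply/eqP; apply/negPn/negP => ne.
      apply: (Chat_min.2 set0); first by rewrite proper0.
      by move=> q Hq; exfalso; apply: Hnq; exists q.
    by rewrite f_norm; apply: mulr_ge0 => //; rewrite invr_ge0.
- move=> Pmax [Pp Pl].
  have tp := thpos (ex_intro _ Pmax Pp).
  have := thL (size Pmax) Pl (ex_intro _ Pmax Pp) => H.
  split.
    apply: ler_wpM2r => //; rewrite -div1r ler_pdivrMr //.
  apply: ler_wpM2r => //; rewrite ler_nat.
  have := simple_size Pp; lia.
Qed.
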